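(* Let $G$ be an antimatroid on a ground set $S$ with $|S|=n$, and for $i,j\ge0$ let $a_{i,j}$ be the number of convex sets $C$ of $G$ with $|C|=i$ and $|\mathrm{int}(C)|=j$. Then: (1) for every integer $0\le k<n$, $$\sum_{i=0}^{k}\sum_{j=0}^{k-i}(-1)^j\binom{k-i}{j}\sum_{s=i}^{n}(-1)^{s-i}\binom{s}{i}a_{s,j}=0;$$ (2) for $k=n$, $$\sum_{i=0}^{n}\sum_{j=0}^{n-i}(-1)^j\binom{n-i}{j}\sum_{s=i}^{n}(-1)^{s-i}\binom{s}{i}a_{s,j}=1.$$
   Context: An antimatroid on a finite set $S$ is a family $\mathcal{F}\subseteq 2^S$ of feasible sets with $\emptyset\in\mathcal{F}$, $S\in\mathcal{F}$, closed under union, and accessible: every nonempty $F\in\mathcal{F}$ contains some $x$ with $F\setminus\{x\}\in\mathcal{F}$. A set $C$ is convex if $S\setminus C\in\mathcal{F}$; convex sets are closed under intersection, and the convex closure $\overline{A}$ of $A$ is the smallest convex set containing $A$. For convex $C$, $p\in C$ is extreme if $p\notin\overline{C\setminus\{p\}}$; $\mathrm{int}(C)$ is the set of non-extreme points of $C$. *)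

(* Defs.v *)
From mathcomp Require Import all_boot all_order all_algebra.
Set Implicit Arguments. Unset Strict Implicit. Unset Printing Implicit Defensive.
Import GRing.Theory Num.Theory.

Section Antimatroid.
Variable T : finType.

Definition antimatroid (F : {set {set T}}) : Prop :=
  [/\ set0 \in F, [set: T] \in F,
      (forall A B, A \in F -> B \in F -> A :|: B \in F) &
      (forall A, A \in F -> A != set0 -> exists2 x, x \in A & A :\ x \in F)].

Definition convex (F : {set {set T}}) (C : {set T}) : bool := ~: C \in F.

Definition cclosure (F : {set {set T}}) (A : {set T}) : {set T} :=
  \bigcap_(C | convex F C && (A \subset C)) C.

Definition extreme (F : {set {set T}}) (C : {set T}) (p : T) : bool :=
  (p \in C) && (p \notin cclosure F (C :\ p)).

Definition cint (F : {set {set T}}) (C : {set T}) : {set T} :=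
  [set p in C | ~~ extreme F C p].

Definition acount (F : {set {set T}}) (i j : nat) : nat :=
  #|[set C : {set T} | convex F C && (#|C| == i) && (#|cint F C| == j)]|.

End Antimatroid.

Local Open Scope ring_scope.

Definition csum (T : finType) (F : {set {set T}}) (k : nat) : int :=
  \sum_(0 <= i < k.+1) \sum_(0 <= j < (k - i)%N.+1)
    ((-1) ^+ j * ('C(k - i, j))%:R *
     \sum_(i <= s < #|T|.+1) ((-1) ^+ (s - i) * ('C(s, i))%:R * (acount F s j)%:R)).

(* Main.v *)
Require Import Defs.
From mathcomp Require Import all_boot all_order all_algebra.
From mathcomp Require Import ring.
Set Implicit Arguments. Unset Strict Implicit. Unset Printing Implicit Defensive.
Import GRing.Theory Num.Theory.
Section Anti.
Variables (T : finType) (F : {set {set T}}).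
Hypothesis hF : antimatroid F.
Implicit Types (A B C : {set T}).

Lemma F0 : set0 \in F. Proof. by case: hF. Qed.
Lemma FU A B : A \in F -> B \in F -> A :|: B \in F. Proof. by case: hF => _ _ H _; apply: H. Qed.
Lemma Facc A : A \in F -> A != set0 -> exists2 x, x \in A & A :\ x \in F.
Proof. by case: hF => _ _ _ H; apply: H. Qed.

Lemma cl_convex A : convex F (cclosure F A).
Proof.
rewrite /convex /cclosure setC_bigcap.
apply: (big_ind (fun X => X \in F)); [exact: F0| exact: FU|].
by move=> X /andP[].
Qed.

Lemma cl_ext A : A \subset cclosure F A.
Proof. by apply/bigcapsP => X /andP[]. Qed.

Lemma cl_min A C : convex F C -> A \subset C -> cclosure F A \subset C.
Proof. by move=> cC hAC; apply: bigcap_inf; rewrite cC hAC. Qed.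

Lemma cl_mono A B : A \subset B -> cclosure F A \subset cclosure F B.
Proof. by move=> AB; apply: cl_min (cl_convex B) (subset_trans AB (cl_ext B)). Qed.

Lemma ext_cl A p : extreme F (cclosure F A) p -> p \in A.
Proof.
case/andP=> pc; apply: contraNT => pA; apply: (subsetP (cl_mono _)) pc.
apply/subsetP => x xA; rewrite in_setD1 (subsetP (cl_ext A)) // andbT.
by apply: contraNneq pA => <-.
Qed.

Lemma augment B : B \in F -> forall A, A \in F -> ~~ (B \subset A) ->
  exists2 x, (x \in B) && (x \notin A) & x |: A \in F.
Proof.
move: {2}#|B| (leqnn #|B|) => n; elim: n B => [|n IH] B hB BF A AF nBA.
  move: hB; rewrite leqn0 cards_eq0 => /eqP B0; by rewrite B0 sub0set in nBA.
have B0 : B != set0 by apply: contraNneq nBA => ->; rewrite sub0set.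
case: (Facc BF B0) => x xB BxF.
have eB : B = x |: (B :\ x) by rewrite setD1K.
case: (boolP (B :\ x \subset A)) => sBA.
  have xA : x \notin A.
    apply: contra nBA => xA; rewrite eB subUset sub1set xA; exact: sBA.
  exists x; first by rewrite xB.
  have -> : x |: A = A :|: B.
    by rewrite eB setUCA (setUidPl sBA).
  exact: FU.
have := IH (B :\ x) _ BxF A AF sBA; case.
  by rewrite -ltnS (leq_trans _ hB) // (cardsD1 x B) xB.
move=> y /andP[]; rewrite in_setD1 => /andP[_ yB] yA yAF.
by exists y; rewrite ?yB.
Qed.

Definition ex (C : {set T}) := C :\: cint F C.

Lemma cl_ex C : convex F C -> cclosure F (ex C) = C.
Proof.
move=> cC; apply/eqP; rewrite eqEsubset cl_min ?subsetDl //=.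
apply: contraT => nsub.
have : ~~ (~: cclosure F (ex C) \subset ~: C) by rewrite setCS.
case/(augment (cl_convex (ex C)) cC) => x /andP[]; rewrite !in_setC negbK => xn xC xF.
have cx : convex F (C :\ x).
  by rewrite /convex setDE setCI setCK setUC.
idtac.
have xe : x \in ex C.
  rewrite /ex in_setD xC andbT /cint inE xC /= negbK /extreme xC /=.
  apply/negP => /(subsetP (cl_min cx (subxx _))).
  by rewrite in_setD1 eqxx.
by move: xn; rewrite (subsetP (cl_ext _)).
Qed.

Lemma cl_eq C A : convex F C ->
  (cclosure F A == C) = (ex C \subset A) && (A \subset C).
Proof.
move=> cC; apply/eqP/andP => [<-|[eA hAC]].
  split; last exact: cl_ext.
  apply/subsetP => p; rewrite /ex in_setD /cint inE negb_and negbK => /andP[/orP[]]//.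
  by move=> /negP.
  move=> ex _; exact: ext_cl.
apply/eqP; rewrite eqEsubset cl_min //= -{1}(cl_ex cC).
exact: cl_mono.
Qed.

Lemma card_ex C : #|C| = (#|ex C| + #|cint F C|)%N.
Proof.
have sub : cint F C \subset C by apply/subsetP => p; rewrite inE => /andP[].
by rewrite /ex -(cardsID (cint F C) C) (setIidPr sub) addnC.
Qed.

End Anti.
Local Open Scope ring_scope.
Lemma subsum (T : finType) (R : comNzRingType) (y : R) (E C : {set T}) :
  E \subset C ->
  \sum_(A : {set T} | (E \subset A) && (A \subset C)) y ^+ #|A| =
  y ^+ #|E| * (y + 1) ^+ #|C :\: E|.
Proof.
move=> EC.
pose f := fun i : T => if i \in C then y else 0.
pose g := fun i : T => if i \in E then 0 else 1 : R.
have := @bigA_distr R 0 1 *%R +%R T f g.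
have -> : \prod_i (f i + g i) = y ^+ #|E| * (y + 1) ^+ #|C :\: E|.
  rewrite -!prodr_const [X in _ = X * _]big_mkcond [X in _ = _ * X]big_mkcond -big_split /=.
  apply: eq_bigr => i _; rewrite /f /g in_setD.
  case: (boolP (i \in E)) => iE; first by rewrite (subsetP EC) // addr0 mulr1.
  by case: (i \in C); rewrite ?mul1r ?add0r.
move=> ->; rewrite big_mkcond [RHS]big_mkcond /=; apply: eq_bigr => A _.
case: ifP => [/andP[EA AC]|].
  rewrite -prodr_const big_mkcond /=; apply: eq_bigr => i _.
  case: ifP => iA; first by rewrite /f /= (subsetP AC).
  by rewrite /g /=; case: ifP => // iE; rewrite (subsetP EA) in iA.
move/negbT; rewrite negb_and => /orP[] /subsetPn [i iA niA].
  by rewrite (bigD1 i) //= ifN // /g iA mul0r.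
by rewrite (bigD1 i) //= iA /f ifN // mul0r.
Qed.
Lemma coefXsub1 (s i : nat) :
  ((('X - 1 : {poly int}) ^+ s)`_i) = (-1) ^+ (s - i) * ('C(s, i))%:R.
Proof.
elim: s i => [|s IH] i.
  by rewrite expr0 coef1; case: i => [|i] /=; rewrite ?mulr1 ?mulr0.
rewrite exprS mulrBl mul1r coefB coefXM IH.
case: i => [|i] /=.
  by rewrite IH !bin0 !subn0 exprS; ring.
rewrite IH (binS s i) natrD subSS.
case: (leqP i s) => his.
  case: (ltnP i s) => his2.
    have -> : (s - i = (s - i.+1).+1)%N by rewrite subnSK.
    rewrite exprS; ring.
  have -> : i = s by apply/eqP; rewrite eqn_leq his his2.
  by rewrite (bin_small (ltnSn s)) subnn mulr0 subr0 add0r.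
by rewrite !bin_small ?mulr0 ?subr0 ?addr0 // ltnW.
Qed.

Section Poly.
Variable k : nat.

Definition U : {poly int} := \poly_(m < k.+1) 1.
Definition W (j : nat) : {poly int} := \poly_(m < k.+1) ((-1) ^+ j * ('C(m, j))%:R).

Definition eqk (p q : {poly int}) := forall m, (m <= k)%N -> p`_m = q`_m.

Lemma eqkM r p q : eqk p q -> eqk (r * p) (r * q).
Proof.
move=> h m hm; rewrite !coefM; apply: eq_bigr => i _; rewrite h //.
exact: leq_trans (leq_subr _ _) hm.
Qed.

Lemma eqk_trans p q r : eqk p q -> eqk q r -> eqk p r.
Proof. by move=> h1 h2 m hm; rewrite h1 // h2. Qed.

Lemma stepW j : eqk (('X - 1) * W j.+1) ('X * W j).
Proof.
move=> m hm; rewrite mulrBl mul1r coefB !coefXM !coef_poly.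
case: m hm => [|m] hm /=.
  by rewrite bin0n /= mulr0 subr0.
rewrite !ltnS hm (ltnW hm) (binS m j) natrD exprS; ring.
Qed.

Lemma Wj j : eqk (('X - 1) ^+ j * W j) ('X ^+ j * U).
Proof.
elim: j => [|j IH].
  by move=> m hm; rewrite !expr0 !mul1r !coef_poly; case: ifP => //; rewrite expr0 bin0 mul1r.
apply: (@eqk_trans _ (('X - 1) ^+ j * ('X * W j))).
  by rewrite exprSr -mulrA; apply: eqkM; apply: stepW.
rewrite mulrCA exprS -mulrA; exact: eqkM.
Qed.

End Poly.

Lemma lemA (T : finType) (F : {set {set T}}) (hF : antimatroid F)
  (R : comNzRingType) (y : R) :
  \sum_(C : {set T} | convex F C) y ^+ #|ex F C| * (y + 1) ^+ #|cint F C|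
  = (y + 1) ^+ #|T|.
Proof.
have := subsum y (sub0set [set: T]).
rewrite setD0 cardsT cards0 expr0 mul1r => <-.
rewrite [RHS](partition_big (cclosure F) (convex F)) => [|A _]; last exact: cl_convex.
apply: eq_bigr => C cC.
have h : #|C :\: ex F C| = #|cint F C|.
  rewrite cardsD (setIidPr (subsetDl _ _)) (card_ex F C) addKn //.
rewrite -h -subsum ?subsetDl //; apply: eq_bigl => A.
by rewrite sub0set subsetT /= (cl_eq hF _ cC).
Qed.

Lemma acountE (T : finType) (F : {set {set T}}) s j :
  (acount F s j)%:R = \sum_(C : {set T} | convex F C)
     ((#|C| == s) && (#|cint F C| == j))%:R :> int.
Proof.
rewrite /acount.
set P := [pred C : {set T} | convex F C && (#|C| == s) && (#|cint F C| == j)].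
have -> : [set C | convex F C && (#|C| == s) && (#|cint F C| == j)] = [set C in P] by [].
rewrite cardsE -sum1_card natr_sum [RHS]big_mkcond [LHS]big_mkcond /=.
apply: eq_bigr => C _; rewrite inE /= -andbA.
by case: (convex F C); case: (#|C| == s); case: (#|cint F C| == j).
Qed.

Lemma pick_nat (a b c : nat) (f : nat -> int) :
  ((c < a)%N \/ (b <= c)%N -> f c = 0) ->
  \sum_(a <= s < b) (if s == c then f s else 0) = f c.
Proof.
move=> hf; case: (boolP ((a <= c) && (c < b))%N) => [/andP[h1 h2]|h].
  rewrite (bigD1_seq c) /= ?mem_index_iota ?h1 ?h2 ?iota_uniq // eqxx big1 ?addr0 //.
  by move=> s /negbTE ->.
rewrite big1_seq ?hf //.
  by move: h; rewrite negb_and -!ltnNge => /orP[]; [left|right].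
move=> s /andP[_]; rewrite mem_index_iota => hs; case: ifP => // /eqP sc.
by move: h; rewrite -sc hs.
Qed.

Section Main.
Variables (T : finType) (F : {set {set T}}).
Hypothesis hF : antimatroid F.

Lemma inner1 i j :
  \sum_(i <= s < #|T|.+1) ((-1) ^+ (s - i) * ('C(s, i))%:R * (acount F s j)%:R)
  = \sum_(C : {set T} | convex F C)
      ((#|cint F C| == j)%:R * ((-1) ^+ (#|C| - i) * ('C(#|C|, i))%:R)) :> int.
Proof.
under eq_bigr => s _ do rewrite acountE big_distrr.
rewrite exchange_big /=; apply: eq_bigr => C cC.
rewrite -(@pick_nat i #|T|.+1 #|C|
  (fun s => (#|cint F C| == j)%:R * ((-1) ^+ (s - i) * ('C(s, i))%:R))).
  apply: eq_bigr => s _; rewrite eq_sym; case: eqVneq => _.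
    by rewrite andTb mulrC.
  by rewrite mulr0.
case=> h; first by rewrite bin_small // !mulr0.
by rewrite ltnNge max_card in h.
Qed.

Lemma inner2 k i :
  \sum_(0 <= j < (k - i)%N.+1) ((-1) ^+ j * ('C(k - i, j))%:R *
     \sum_(i <= s < #|T|.+1) ((-1) ^+ (s - i) * ('C(s, i))%:R * (acount F s j)%:R))
  = \sum_(C : {set T} | convex F C)
      ((-1) ^+ #|cint F C| * ('C(k - i, #|cint F C|))%:R *
        ((-1) ^+ (#|C| - i) * ('C(#|C|, i))%:R)) :> int.
Proof.
under eq_bigr => j _ do rewrite inner1 big_distrr.
rewrite exchange_big /=; apply: eq_bigr => C cC.
rewrite -(@pick_nat 0 (k - i).+1 #|cint F C|
  (fun j => (-1) ^+ j * ('C(k - i, j))%:R *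
        ((-1) ^+ (#|C| - i) * ('C(#|C|, i))%:R))).
  apply: eq_bigr => j _; rewrite eq_sym; case: eqVneq => _.
    by rewrite /= mul1r.
  by rewrite /= mul0r mulr0.
case=> h //; by rewrite bin_small // mulr0 mul0r.
Qed.

Lemma csumE k :
  csum F k = \sum_(C : {set T} | convex F C)
     ((('X - 1) ^+ #|C| * W k #|cint F C|)`_k).
Proof.
rewrite /csum; under eq_bigr => i _ do rewrite inner2.
rewrite exchange_big /=; apply: eq_bigr => C cC.
rewrite coefM big_mkord; apply: eq_bigr => i _.
rewrite coefXsub1 coef_poly ltnS leq_subr mulrC //.
Qed.

Lemma csum_val k : csum F k = (#|T| <= k)%N%:R.
Proof.
rewrite csumE.
under eq_bigr => C cC do
  rewrite (card_ex F C) exprD -mulrA (@eqkM k _ _ _ (@Wj k #|cint F C|) k (leqnn k)) mulrA.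
rewrite -coef_sum -big_distrl /=.
have := lemA hF ('X - 1 : {poly int}); rewrite subrK => ->; rewrite coefXnM.
case: ltnP => h.
  by [].
by rewrite coef_poly ltnS leq_subr.
Qed.

End Main.

Theorem corollary4p4 (T : finType) (F : {set {set T}}) :
  antimatroid F ->
  (forall k : nat, (k < #|T|)%N -> csum F k = 0%R) /\ csum F #|T| = 1%R.
Proof.
move=> hF; split.
  by move=> k hk; rewrite (csum_val hF) leqNgt hk.
by rewrite (csum_val hF) leqnn.
Qed.
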